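(* Let $q$ be an even prime power which is a square, and assume that the affine space $AG(3,q)$ contains a translation cap of size $q^{3/2}$. Then for every integer $N>2$ there exists a subset $K$ of the affine space $AG(N,q)$ with $|K|\le q^{N/2}$ such that every point of $AG(N,q)\setminus K$ lies on at least $(q-2)/2$ distinct secants of $K$.
   Context: $AG(N,q)$ denotes the $N$-dimensional affine space over $\mathbb{F}_q$, identified with $\mathbb{F}_q^N$. A cap is a set of points no three of which are collinear. A translation cap in $AG(N,q)$ is a cap $K$ on which some group of translations of $AG(N,q)$ acts regularly (equivalently, $K$ is a coset $x+T$ of an additive subgroup $T$ of $\mathbb{F}_q^N$). A secant of a point set $K$ is a line meeting $K$ in at least two points. *)

(* Defs.v *)
From HB Require Import structures.
From mathcomp Require Import all_boot all_order all_algebra all_field.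
Set Implicit Arguments. Unset Strict Implicit. Unset Printing Implicit Defensive.
Import GRing.Theory.
Local Open Scope ring_scope.

(* AG(N,q) is identified with the row space 'rV[F]_N, where F is the field of
   q elements. *)

Definition aline (F : finFieldType) (N : nat) (a d : 'rV[F]_N) : {set 'rV[F]_N} :=
  [set a + t *: d | t : F].

Definition is_line (F : finFieldType) (N : nat) (L : {set 'rV[F]_N}) : bool :=
  [exists a : 'rV[F]_N, exists d : 'rV[F]_N, (d != 0) && (L == aline a d)].

Definition is_cap (F : finFieldType) (N : nat) (K : {set 'rV[F]_N}) : bool :=
  [forall L : {set 'rV[F]_N}, is_line L ==> (#|L :&: K| <= 2)%N].

Definition is_addsubgroup (F : finFieldType) (N : nat) (T : {set 'rV[F]_N}) : bool :=
  (0 \in T) && [forall u in T, forall v in T, u - v \in T].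

Definition is_translation_cap (F : finFieldType) (N : nat) (K : {set 'rV[F]_N}) : Prop :=
  is_cap K /\
  exists (x : 'rV[F]_N) (T : {set 'rV[F]_N}),
    is_addsubgroup T /\ K = [set x + t | t in T].

Definition secants_through (F : finFieldType) (N : nat) (K : {set 'rV[F]_N})
  (x : 'rV[F]_N) : {set {set 'rV[F]_N}} :=
  [set L : {set 'rV[F]_N} | [&& is_line L, x \in L & (2 <= #|L :&: K|)%N]].

(* Main.v *)
Require Import Defs.
From HB Require Import structures.
From mathcomp Require Import all_boot all_order all_algebra all_field.
From mathcomp Require Import ring.
Set Implicit Arguments. Unset Strict Implicit. Unset Printing Implicit Defensive.
Import GRing.Theory.

Lemma fiber2 (A B : finType) (f : A -> B) (g : A -> A) (D : {set A}) :
  {in D &, forall a b, f a = f b -> b = a \/ b = g a} -> #|D| <= 2 * #|f @: D|.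
Proof.
move=> H.
rewrite -sum1_card (partition_big f (mem (f @: D))); last by move=> i hi; apply: imset_f.
rewrite mulnC -sum_nat_const; apply: leq_sum => y hy.
have -> : \sum_(i | (i \in D) && (f i == y)) 1 = #|[set i in D | f i == y]|.
  by rewrite -sum1_card; apply: eq_bigl => i; rewrite inE.
case/imsetP: hy => a ha ->.
apply: leq_trans (subset_leq_card (_ : _ \subset [set a; g a])) _; last first.
  by rewrite cards2; case: (_ != _).
apply/subsetP => i; rewrite !inE => /andP[hi /eqP e].
by have [->|->] := H a i ha hi (esym e); rewrite eqxx ?orbT.
Qed.

Lemma char2 (F : finFieldType) : (2 %| #|F|)%N -> (2%:R : F)%R = 0%R.
Proof.
move=> h2; have [p pp pc] := finPcharP F.
have := card_pprimeChar pc => /= hc.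
have p2 : p = 2%N.
  move: h2; rewrite hc Euclid_dvdX // => /andP[h _].
  by apply/eqP; rewrite eq_sym -dvdn_prime2.
by clear hc; subst p; case/andP: pc => _ /eqP.
Qed.

Section Main.
Local Open Scope ring_scope.
Variable F : finFieldType.

Definition free N (T : {set 'rV[F]_N}) := forall (l : F) u,
  l != 0 -> l != 1 -> u \in T -> l *: u \in T -> u = 0.

Lemma asg_sub N (T : {set 'rV[F]_N}) : is_addsubgroup T ->
  (0 \in T) /\ (forall u v, u \in T -> v \in T -> u - v \in T) /\
  (forall u v, u \in T -> v \in T -> u + v \in T).
Proof.
case/andP=> h0 /forallP hs.
have hB u v : u \in T -> v \in T -> u - v \in T.
  by move=> hu hv; move: (hs u) => /implyP/(_ hu)/forallP/(_ v)/implyP/(_ hv).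
split; first by []. split; first by []. move=> u v hu hv.
by rewrite -[v]opprK; apply: (hB) => //; rewrite -sub0r; apply: (hB).
Qed.

Lemma cover N (T : {set 'rV[F]_N}) (l : F) : is_addsubgroup T -> free T ->
  (#|T| ^ 2 = #|F| ^ N)%N -> l != 0 -> l != 1 ->
  forall x, exists a b, [/\ a \in T, b \in T & x = a + l *: b].
Proof.
move=> /asg_sub [h0 [hB hD]] hf hc l0 l1 x.
pose S := [set p.1 + l *: p.2 | p in setX T T].
have cS : #|S| = #|'rV[F]_N|.
  rewrite card_in_imset; first by rewrite cardsX card_mx mul1n -hc mulnn.
  move=> [a b] [a' b'] /setXP[/= ha hb] /setXP[/= ha' hb'] /= e.
  have e2 : l *: (b - b') = a' - a.
    by rewrite scalerBr; apply/eqP; rewrite subr_eq addrAC -e addrAC subrr add0r.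
  have hm : l *: (b - b') \in T by rewrite e2; apply: (hB).
  have hz := hf l (b - b') l0 l1 (hB _ _ hb hb') hm.
  move: e2; rewrite hz scaler0 => /esym/eqP; rewrite subr_eq0 => /eqP->.
  by move/eqP: hz; rewrite subr_eq0 => /eqP->.
have : x \in S.
  have -> : S = setT.
    apply/eqP; rewrite eqEcard subsetT cardsT cS /=.
    exact: leqnn.
  exact: in_setT.
by case/imsetP=> [[a b]] /setXP[/= ha hb] ->; exists a, b.
Qed.


Lemma line_pts N (T : {set 'rV[F]_N}) a b t : is_addsubgroup T -> free T ->
  a \in T -> b \in T -> b != 0 -> a + t *: b \in T -> t = 0 \/ t = 1.
Proof.
move=> /asg_sub [h0 [hB hD]] hf ha hb b0 ht.
have : t *: b \in T by move: (hB _ _ ht ha); rewrite addrAC subrr add0r.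
case: (eqVneq t 0) => [->|t0]; first by left.
case: (eqVneq t 1) => [->|t1]; first by right.
by move=> /(hf t b t0 t1 hb) e; rewrite e eqxx in b0.
Qed.

Lemma secant_count N (T : {set 'rV[F]_N}) : is_addsubgroup T -> free T ->
  (#|T| ^ 2 = #|F| ^ N)%N -> forall x, x \notin T ->
  (#|F| - 2 <= 2 * #|secants_through T x|)%N.
Proof.
move=> hT hf hc x xT.
have [h0 [hB hD]] := asg_sub hT.
pose pr l := [pick p : 'rV[F]_N * 'rV[F]_N | (p.1 \in T) && (p.2 \in T) && (x == p.1 + l *: p.2)].
pose phi l := if pr l is Some p then aline p.1 p.2 else set0.
pose D := [set l : F | (l != 0) && (l != 1)].
have spec l : l \in D -> exists a b, [/\ a \in T, b \in T, x = a + l *: b, b != 0 & phi l = aline a b].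
  rewrite inE => /andP[l0 l1]; rewrite /phi /pr; case: pickP => [[a b] /= /andP[/andP[ha hb] /eqP ex]|].
    exists a, b; split => //; apply/eqP => b0; move: xT.
    by rewrite ex b0 scaler0 addr0 ha.
  have [a [b [ha hb ex]]] := cover hT hf hc l0 l1 x.
  by move=> /(_ (a, b)); rewrite /= ha hb ex eqxx.
have inl (a b : 'rV[F]_N) (t : F) : a + t *: b \in aline a b by apply/imsetP; exists t.
have sec l : l \in D -> phi l \in secants_through T x.
  move=> /spec [a [b [ha hb ex b0 ->]]]; rewrite inE; apply/and3P; split.
  - by apply/existsP; exists a; apply/existsP; exists b; rewrite b0 eqxx.
  - by rewrite ex inl.
  - apply: leq_trans (subset_leq_card (_ : [set a; a + b] \subset _)).
      rewrite cards2; case: eqP => // /esym/eqP.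
      by rewrite -{2}[a]addr0 (inj_eq (addrI a)) (negbTE b0).
    apply/subsetP => y; rewrite !inE => /orP[] /eqP ->; apply/andP; split.
    - by rewrite -{1}[a]addr0 -(scale0r b) inl.
    - by [].
    - by rewrite -{1}[b]scale1r inl.
    - by rewrite hD.
have fib : {in D &, forall l m, phi l = phi m -> m = l \/ m = 1 - l}.
  move=> l m /spec [a [b [ha hb ex b0 ->]]] /spec [a' [b' [ha' hb' ex' b0' ->]]] eL.
  have : a' \in aline a b by rewrite eL -{1}[a']addr0 -(scale0r b') inl.
  case/imsetP => t _ et.
  have : a' + b' \in aline a b by rewrite eL -{1}[b']scale1r inl.
  case/imsetP => s _ es.
  have ta : a + t *: b \in T by rewrite -et.
  have sa : a + s *: b \in T by rewrite -es hD.
  have [t0|t1] := line_pts hT hf ha hb b0 ta; have [s0|s1] := line_pts hT hf ha hb b0 sa;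
    rewrite ?t0 ?t1 ?s0 ?s1 ?scale0r ?scale1r ?addr0 in es et; move: es; rewrite et => es.
  - by move: es; rewrite -{2}[a]addr0 => /addrI e; rewrite e eqxx in b0'.
  - left; move/addrI: es => eb; move: ex'; rewrite ex et eb => /addrI /eqP.
    by rewrite -subr_eq0 -scalerBl scaler_eq0 (negbTE b0) orbF subr_eq0 => /eqP ->.
  - right; have eb : b' = - b.
      by apply/eqP; rewrite -(inj_eq (addrI (a + b))) es addrK eqxx.
    move: ex'; rewrite ex et eb -addrA => /addrI.
    rewrite scalerN -{2}[b]scale1r -scalerBl => /eqP.
    rewrite -subr_eq0 -scalerBl scaler_eq0 (negbTE b0) orbF subr_eq0 => /eqP ->.
    by rewrite opprB addrC subrK.
  - by move: es; rewrite -{2}[a + b]addr0 => /addrI e; rewrite e eqxx in b0'.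
have cD : #|D| = (#|F| - 2)%N.
  rewrite cardsCs; congr (_ - _)%N.
  have -> : ~: D = [set 0; 1] by apply/setP => l; rewrite !inE negb_and !negbK.
  by rewrite cards2 eq_sym oner_neq0.
rewrite -cD; apply: leq_trans (fiber2 fib) _.
rewrite leq_mul2l; apply/orP; right; apply: subset_leq_card.
by apply/subsetP => L /imsetP[l hl ->]; apply: sec.
Qed.


Definition good N (T : {set 'rV[F]_N}) :=
  [/\ is_addsubgroup T, free T & (#|T| ^ 2 = #|F| ^ N)%N].
Definition Ex N := exists T : {set 'rV[F]_N}, good T.

Lemma asg_intro N (T : {set 'rV[F]_N}) : 0 \in T ->
  (forall u v, u \in T -> v \in T -> u - v \in T) -> is_addsubgroup T.
Proof.
move=> h0 hB; rewrite /is_addsubgroup h0 /=; apply/forallP => u; apply/implyP => hu.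
by apply/forallP => v; apply/implyP => hv; apply: hB.
Qed.

Lemma good_prod n1 n2 : Ex n1 -> Ex n2 -> Ex (n1 + n2).
Proof.
move=> [T1 [a1 f1 c1]] [T2 [a2 f2 c2]].
have [h01 [hB1 _]] := asg_sub a1; have [h02 [hB2 _]] := asg_sub a2.
exists [set row_mx p.1 p.2 | p in setX T1 T2]; split.
- apply: asg_intro.
    by rewrite -row_mx0; apply/imsetP; exists (0, 0) => //; rewrite inE /= h01 h02.
  move=> u v /imsetP[[u1 u2] /setXP[/= hu1 hu2] ->] /imsetP[[v1 v2] /setXP[/= hv1 hv2] ->].
  rewrite opp_row_mx add_row_mx; apply/imsetP; exists (u1 - v1, u2 - v2) => //.
  by rewrite inE /= hB1 ?hB2.
- move=> l u l0 l1 /imsetP[[u1 u2] /setXP[/= hu1 hu2] ->].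
  rewrite scale_row_mx => /imsetP[[v1 v2] /setXP[/= hv1 hv2]] /eq_row_mx[e1 e2].
  rewrite (f1 l u1 l0 l1 hu1) ?e1 // (f2 l u2 l0 l1 hu2) ?e2 //.
  exact: row_mx0.
- rewrite card_in_imset ?cardsX ?expnMn ?c1 ?c2 ?expnD //.
  move=> [u1 u2] [v1 v2] _ _ /= /eq_row_mx[-> ->] //.
Qed.

Lemma neg2 (a : F) : 2%:R = 0 :> F -> - a = a.
Proof.
move=> two0; apply/eqP; rewrite eq_sym -subr_eq0 opprK -mulr2n -mulr_natr two0 mulr0 //.
Qed.

Lemma good2 : 2%:R = 0 :> F -> Ex 2.
Proof.
move=> two0.
pose f (a : F) : 'rV[F]_2 := \row_(i < 2) (if i == ord0 then a else a ^+ 2).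
have f0 a : f a 0 ord0 = a by rewrite mxE.
have f1 a : f a 0 ord_max = a ^+ 2 by rewrite mxE.
have fz : f 0 = 0 by apply/rowP => i; rewrite !mxE; case: ifP => //; rewrite expr0n.
have finj : injective f by move=> a b /(congr1 (fun v : 'rV[F]_2 => v 0 ord0)); rewrite !f0.
exists [set f a | a in [set: F]]; split.
- apply: asg_intro; first by rewrite -fz; apply: imset_f; rewrite inE.
  move=> u v /imsetP[a _ ->] /imsetP[b _ ->]; apply/imsetP; exists (a - b); rewrite ?inE //.
  apply/rowP => i; rewrite !mxE; case: ifP => // _.
  by rewrite sqrrB -mulr_natr two0 mulr0 subr0 (neg2 (b ^+ 2) two0).
- move=> l u l0 l1 /imsetP[a _ ->] /imsetP[c _ e].
  have e0 := congr1 (fun v : 'rV[F]_2 => v 0 ord0) e; have e1 := congr1 (fun v : 'rV[F]_2 => v 0 ord_max) e.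
  move: e0 e1; rewrite /= !mxE /= => <- e1.
  suff -> : a = 0 by exact: fz.
  have : l * (l - 1) * a ^+ 2 = 0.
    by rewrite -[0](subrr (l * a ^+ 2)) {1}e1; ring.
  move/eqP; rewrite !mulf_eq0 (negbTE l0) subr_eq0 (negbTE l1) /=.
  by rewrite orbb => /eqP.
- by rewrite card_imset // cardsT.
Qed.

Lemma good3 r : #|F| = (r ^ 2)%N ->
  (exists C : {set 'rV[F]_3}, is_translation_cap C /\ #|C| = (r ^ 3)%N) -> Ex 3.
Proof.
move=> hF [C [[hcap [x [T [hT eC]]]] cC]].
have [h0 [hB hD]] := asg_sub hT.
have cT : #|T| = #|C| by rewrite eC card_imset //; apply: addrI.
exists T; split => //; last by rewrite cT cC hF -!expnM mulnC.
move=> l u l0 l1 hu hlu; apply/eqP; apply: contraT => u0.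
have inl (a b : 'rV[F]_3) (t : F) : a + t *: b \in aline a b by apply/imsetP; exists t.
have inC t : t \in T -> x + t \in C by move=> ht; rewrite eC; apply: imset_f.
have : (3 <= #|aline x u :&: C|)%N.
  apply: leq_trans (subset_leq_card (_ : x |: [set x + u; x + l *: u] \subset _)).
    rewrite cardsU1 cards2 !inE.
    have n1 : (x == x + u) = false by rewrite -{1}[x]addr0 (inj_eq (addrI x)) eq_sym (negbTE u0).
    have n2 : (x == x + l *: u) = false.
      by rewrite -{1}[x]addr0 (inj_eq (addrI x)) eq_sym scaler_eq0 (negbTE l0) (negbTE u0).
    have n3 : (x + u == x + l *: u) = false.
      rewrite (inj_eq (addrI x)) -subr_eq0 -{1}[u]scale1r -scalerBl scaler_eq0 (negbTE u0) orbF.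
      by rewrite subr_eq0 eq_sym (negbTE l1).
    by rewrite n1 n2 n3.
  apply/subsetP => y; rewrite !inE => /orP[/eqP->|/orP[]/eqP->]; apply/andP; split.
  - by rewrite -{1}[x]addr0 -(scale0r u) inl.
  - by rewrite -{1}[x]addr0 inC.
  - by rewrite -{1}[u]scale1r inl.
  - by rewrite inC.
  - by rewrite inl.
  - by rewrite inC.
have : is_line (aline x u).
  by apply/existsP; exists x; apply/existsP; exists u; rewrite u0 eqxx.
by move: hcap => /forallP/(_ (aline x u)) /implyP h /h; case: #|_| => [|[|[|]]].
Qed.

Lemma goodN r : (2 %| #|F|)%N -> #|F| = (r ^ 2)%N ->
  (exists C : {set 'rV[F]_3}, is_translation_cap C /\ #|C| = (r ^ 3)%N) ->
  forall k, Ex k.+2 /\ Ex k.+3.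
Proof.
move=> h2 hF hC; have e2 := good2 (char2 h2); have e3 := good3 hF hC.
elim=> [|k [ih1 ih2]]; first by [].
split=> //; have := good_prod ih1 e2; by rewrite addn2.
Qed.

End Main.

Unset Implicit Arguments.
Theorem lemma4p2 (F : finFieldType) (r : nat) :
  (2 %| #|F|)%N ->
  #|F| = (r ^ 2)%N ->
  (exists C : {set 'rV[F]_3}, is_translation_cap C /\ #|C| = (r ^ 3)%N) ->
  forall N : nat, (2 < N)%N ->
  exists K : {set 'rV[F]_N},
    (#|K| ^ 2 <= #|F| ^ N)%N /\
    forall x : 'rV[F]_N, x \notin K ->
      (#|F| - 2 <= 2 * #|secants_through K x|)%N.
Proof.
move=> h2 hF hC [|[|[|k]]] // _.
have [_ [T [hT hf hc]]] := goodN h2 hF hC k.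
exists T; split; first by rewrite hc.
exact: secant_count.
Qed.
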